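(* Let $\varphi$ be a propositional (Boolean) formula and let $W$ be a set of valuations. Then for every $w\in W$: $w\models\varphi$ if and only if $w\models\bigvee_{v\in\mathrm{base}(\varphi,W)}\bigwedge_{\ell\in v}\ell$.
   Context: Fix a set $\mathrm{Prop}$ of propositional atoms; a literal is $p$ or $\neg p$ for $p\in\mathrm{Prop}$. A valuation is a maximal consistent set of literals (identified with a truth assignment); $w\models\varphi$ means the valuation $w$ satisfies the Boolean formula $\varphi$. A subvaluation is a subset of a valuation. An atom $p$ is essential to $\varphi$ iff $p$ occurs in every formula classically equivalent to $\varphi$. Given a set $W$ of valuations, a subvaluation $v$ satisfies $\varphi$ modulo $W$ iff every $u\in W$ with $v\subseteq u$ satisfies $\varphi$; $v$ essentially satisfies $\varphi$ modulo $W$ iff it satisfies $\varphi$ modulo $W$ and every atom occurring (positively or negatively) in a literal of $v$ is essential to $\varphi$; $v$ is a prime subvaluation of $\varphi$ modulo $W$ iff $v$ essentially satisfies $\varphi$ modulo $W$ and no proper subset of $v$ does. $\mathrm{base}(\varphi,W)$ denotes the set of all prime subvaluations of $\varphi$ modulo $W$. *)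

(* Defs.v *)
Set Implicit Arguments.

Inductive form (A : Type) : Type :=
| FTop : form A
| FBot : form A
| FVar : A -> form A
| FNot : form A -> form A
| FAnd : form A -> form A -> form A
| FOr  : form A -> form A -> form A
| FImp : form A -> form A -> form A.

Arguments FTop {A}. Arguments FBot {A}.

(* A valuation (maximal consistent set of literals) identified with a truth assignment *)
Definition valuation (A : Type) := A -> bool.

Fixpoint eval (A : Type) (w : valuation A) (f : form A) : bool :=
  match f with
  | FTop => true
  | FBot => false
  | FVar p => w p
  | FNot g => negb (eval w g)
  | FAnd g h => andb (eval w g) (eval w h)
  | FOr g h => orb (eval w g) (eval w h)
  | FImp g h => orb (negb (eval w g)) (eval w h)
  end.

Definition models (A : Type) (w : valuation A) (f : form A) : Prop := eval w f = true.

(* literal: (p, true) is p, (p, false) is ~p *)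
Definition literal (A : Type) := (A * bool)%type.
Definition lit_atom (A : Type) (l : literal A) : A := fst l.

Definition lit_in (A : Type) (l : literal A) (w : valuation A) : Prop := w (fst l) = snd l.

Definition litset (A : Type) := literal A -> Prop.
Definition valset (A : Type) := valuation A -> Prop.

Definition sub_val (A : Type) (v : litset A) (w : valuation A) : Prop :=
  forall l, v l -> lit_in l w.

Definition subvaluation (A : Type) (v : litset A) : Prop :=
  exists w : valuation A, sub_val v w.

Fixpoint occurs (A : Type) (p : A) (f : form A) : Prop :=
  match f with
  | FTop | FBot => False
  | FVar q => q = p
  | FNot g => occurs p g
  | FAnd g h | FOr g h | FImp g h => occurs p g \/ occurs p h
  end.

Definition equivalent (A : Type) (f g : form A) : Prop :=
  forall w : valuation A, eval w f = eval w g.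

Definition essential (A : Type) (p : A) (f : form A) : Prop :=
  forall g : form A, equivalent g f -> occurs p g.

Definition sat_mod (A : Type) (v : litset A) (f : form A) (W : valset A) : Prop :=
  forall u, W u -> sub_val v u -> models u f.

Definition ess_sat_mod (A : Type) (v : litset A) (f : form A) (W : valset A) : Prop :=
  subvaluation v /\ sat_mod v f W /\ (forall l, v l -> essential (lit_atom l) f).

Definition proper_subset (A : Type) (v' v : litset A) : Prop :=
  (forall l, v' l -> v l) /\ (exists l, v l /\ ~ v' l).

Definition prime_subval (A : Type) (v : litset A) (f : form A) (W : valset A) : Prop :=
  ess_sat_mod v f W /\ (forall v', proper_subset v' v -> ~ ess_sat_mod v' f W).

Definition base (A : Type) (f : form A) (W : valset A) : litset A -> Prop :=
  fun v => prime_subval v f W.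

(* w |= \/_{v in B} /\_{l in v} l   (semantics of the disjunction of conjunctions) *)
Definition models_dnf (A : Type) (w : valuation A) (B : litset A -> Prop) : Prop :=
  exists v, B v /\ (forall l, v l -> lit_in l w).

(* Main.v *)
Require Import Defs.
From Stdlib Require Import List Classical ClassicalEpsilon Lia.
Import ListNotations.

Fixpoint atoms {A : Type} (f : form A) : list A :=
  match f with
  | FTop | FBot => []
  | FVar q => [q]
  | FNot g => atoms g
  | FAnd g h | FOr g h | FImp g h => atoms g ++ atoms h
  end.

Lemma occurs_atoms (A : Type) (p : A) f : occurs p f -> In p (atoms f).
Proof.
  induction f; simpl; intros H; try tauto; try (subst; auto);
  apply in_or_app; tauto.
Qed.

Lemma eval_ext (A : Type) (f : form A) u w :
  (forall p, occurs p f -> u p = w p) -> eval u f = eval w f.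
Proof.
  induction f; simpl; intros H; auto;
  try (rewrite IHf1, IHf2 by (intros; apply H; tauto); reflexivity).
  rewrite IHf; auto.
Qed.

Lemma filterP {X : Type} (P : X -> Prop) (S : list X) :
  exists S', (forall x, In x S' <-> In x S /\ P x) /\ length S' <= length S /\
    ((exists x, In x S /\ ~ P x) -> length S' < length S).
Proof.
  induction S as [|a S IH].
  - exists []; simpl; split; [tauto|split; [lia|]]. intros [x [[] _]].
  - destruct IH as [S' [H1 [H2 H3]]].
    destruct (classic (P a)) as [Pa|nPa].
    + exists (a :: S'); simpl; split; [split|split].
      * intros [<-|Hx]; [tauto| apply H1 in Hx; tauto].
      * intros [[<-|Hx] Px]; [auto| right; apply H1; tauto].
      * lia.
      * intros [x [[<-|Hx] nPx]]; [tauto|]. assert (length S' < length S) by eauto. lia.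
    + exists S'; simpl; split; [split|split].
      * intros Hx; apply H1 in Hx; tauto.
      * intros [[<-|Hx] Px]; [tauto| apply H1; tauto].
      * lia.
      * intros _; lia.
Qed.

Definition upd {A : Type} (u : valuation A) (a : A) (b : bool) : valuation A :=
  fun p => if excluded_middle_informative (p = a) then b else u p.

Lemma ess_indep {A : Type} (phi : form A) (L : list A) : forall u w,
  (forall p, occurs p phi -> ~ In p L -> u p = w p) ->
  (forall p, In p L -> essential p phi -> u p = w p) ->
  eval u phi = eval w phi.
Proof.
  induction L as [|a L IH]; intros u w H1 H2.
  - apply eval_ext. intros p Hp; apply H1; auto.
  - destruct (classic (u a = w a \/ essential a phi)) as [Hc|Hc].
    + apply IH.
      * intros p Hp HnL. destruct (classic (p = a)) as [->|Hne].
        { destruct Hc as [Hc|Hc]; auto. apply H2; simpl; auto. }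
        apply H1; simpl; auto. intros [->|?]; auto.
      * intros p Hp He; apply H2; simpl; auto.
    + assert (Hne : ~ essential a phi) by tauto.
      unfold essential in Hne. apply not_all_ex_not in Hne as [g Hg].
      apply imply_to_and in Hg as [Heq Hno].
      set (u' := upd u a (w a)).
      transitivity (eval u' phi).
      * rewrite <- (Heq u), <- (Heq u'). apply eval_ext.
        intros p Hp. unfold u', upd.
        destruct (excluded_middle_informative (p = a)); [subst; contradiction|auto].
      * apply IH; unfold u', upd.
        -- intros p Hp HnL. destruct (excluded_middle_informative (p = a)); [subst; auto|].
           apply H1; simpl; auto. intros [->|?]; auto.
        -- intros p Hp He. destruct (excluded_middle_informative (p = a)); [subst; auto|].
           apply H2; simpl; auto.
Qed.

Lemma ess_sat_ext {A : Type} (v v' : litset A) f W :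
  (forall l, v l <-> v' l) -> ess_sat_mod v f W -> ess_sat_mod v' f W.
Proof.
  intros E [[w0 Hw0] [Hs He]]. split; [|split].
  - exists w0; intros l Hl; apply Hw0, E; auto.
  - intros u Wu Hu; apply Hs; auto. intros l Hl; apply Hu, E; auto.
  - intros l Hl; apply He, E; auto.
Qed.

Lemma min_exists {A : Type} (phi : form A) (W : valset A) (w : valuation A) n :
  forall S : list (literal A), length S <= n -> ess_sat_mod (fun l => In l S) phi W ->
  (forall l, In l S -> lit_in l w) ->
  exists S', prime_subval (fun l => In l S') phi W /\ (forall l, In l S' -> lit_in l w).
Proof.
  induction n as [|n IH]; intros S Hlen Hes Hw;
  (destruct (classic (exists v', proper_subset v' (fun l => In l S) /\ ess_sat_mod v' phi W))
     as [[v' [[Hsub [l0 [Hl0 Hn0]]] Hes']]|Hno];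
   [ destruct (filterP v' S) as [S' [F1 [F2 F3]]];
     assert (Hlt : length S' < length S) by (apply F3; eauto)
   | exists S; split; auto; split; auto; intros v' Hp Hv'; apply Hno; eauto ]).
  - lia.
  - apply (IH S'). lia.
    + apply (ess_sat_ext v'); auto. intros l; rewrite F1; split; [intros; split; auto| tauto].
    + intros l Hl; apply Hw, F1; auto.
Qed.

Theorem theorem2 (A : Type) (phi : form A) (W : valset A) :
  forall w : valuation A, W w ->
    (models w phi <-> models_dnf w (base phi W)).
Proof.
  intros w Ww. split.
  - intros Hm.
    destruct (filterP (fun p => essential p phi) (atoms phi)) as [E [E1 _]].
    set (S0 := map (fun p => (p, w p)) E).
    assert (HS0 : forall l, In l S0 -> lit_in l w).
    { intros l Hl. unfold S0 in Hl. apply in_map_iff in Hl as [p [<- _]].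
      reflexivity. }
    destruct (min_exists phi W w (length S0) S0 (le_n _)) as [S' [HP HS']]; auto.
    + split; [|split].
      * exists w; auto.
      * intros u Wu Hu. unfold models. rewrite <- Hm.
        apply (ess_indep phi (atoms phi)).
        -- intros p Hp Hn; exfalso; apply Hn, occurs_atoms; auto.
        -- intros p Hp He. apply (Hu (p, w p)). unfold S0.
           apply in_map_iff. exists p; split; auto. apply E1; auto.
      * intros l Hl. unfold S0 in Hl. apply in_map_iff in Hl as [p [<- Hp]].
        apply E1 in Hp. apply Hp.
    + exists (fun l => In l S'); split; auto.
  - intros [v [[[_ [Hs _]] _] Hv]]. apply Hs; auto.
Qed.
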